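(* Let $1=v_1\ge v_2\ge v_3\ge v_4>0$ and, for $i\in\{1,2,3,4\}$ and $j\in\{A,B,C\}$, let $T_{ij}$ be the probability that $a_i$ wins the knockout tournament of type $j$. Consider the equations $$\frac{4T_{1A}-2T_{1B}-2T_{1C}}{5T_{1A}-T_{1B}-4T_{1C}}=\frac{4T_{2A}-2T_{2B}-2T_{2C}}{5T_{2A}-T_{2B}-4T_{2C}},\qquad \frac{4T_{3A}-2T_{3C}-2T_{3B}}{5T_{3A}-T_{3B}-4T_{3C}}=\frac{4T_{4A}-2T_{4C}-2T_{4B}}{5T_{4A}-T_{4B}-4T_{4C}}.$$ The only solutions of these equations are the weight vectors with $v_1=v_2=1$ and $v_3=v_4\le 1$.
   Context: Four teams $a_1,\dots,a_4$ with weights $v_1,\dots,v_4$. In any game between $a_i$ and $a_j$, $a_i$ wins with probability $v_i/(v_i+v_j)$, independently. A knockout tournament consists of two first-round games whose winners meet in a final. Tournament $A$: first round $a_1$ vs $a_4$ and $a_2$ vs $a_3$. Tournament $B$: $a_1$ vs $a_3$ and $a_2$ vs $a_4$. Tournament $C$: $a_1$ vs $a_2$ and $a_3$ vs $a_4$. *)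

(* Defs.v *)
From mathcomp Require Import all_boot all_order all_algebra.
Set Implicit Arguments. Unset Strict Implicit. Unset Printing Implicit Defensive.
Import Order.TTheory GRing.Theory Num.Theory.
Local Open Scope ring_scope.

Inductive tourn := TA | TB | TC.

Definition win {R : realFieldType} (x y : R) : R := x / (x + y).

(* Probability that team with weight vi wins a 4-team knockout where it first
   plays the team of weight vo, while the teams of weights vk and vl play
   each other in the other first-round game (all games independent). *)
Definition ko {R : realFieldType} (vi vo vk vl : R) : R :=
  win vi vo * (win vk vl * win vi vk + win vl vk * win vi vl).

(* T v1 v2 v3 v4 j i = probability that a_i wins tournament j.
   A : a1-a4, a2-a3 ;  B : a1-a3, a2-a4 ;  C : a1-a2, a3-a4.
   Teams are indexed 1..4 (other indices give 0). *)
Definition T {R : realFieldType} (v1 v2 v3 v4 : R) (j : tourn) (i : nat) : R :=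
  match j, i with
  | TA, 1%N => ko v1 v4 v2 v3
  | TA, 2%N => ko v2 v3 v1 v4
  | TA, 3%N => ko v3 v2 v1 v4
  | TA, 4%N => ko v4 v1 v2 v3
  | TB, 1%N => ko v1 v3 v2 v4
  | TB, 2%N => ko v2 v4 v1 v3
  | TB, 3%N => ko v3 v1 v2 v4
  | TB, 4%N => ko v4 v2 v1 v3
  | TC, 1%N => ko v1 v2 v3 v4
  | TC, 2%N => ko v2 v1 v3 v4
  | TC, 3%N => ko v3 v4 v1 v2
  | TC, 4%N => ko v4 v3 v1 v2
  | _, _ => 0
  end.

(* The tratio (4T_{iA} - 2T_{iB} - 2T_{iC}) / (5T_{iA} - T_{iB} - 4T_{iC})
   (field division, with the MathComp convention x / 0 = 0). *)
Definition tratio {R : realFieldType} (v1 v2 v3 v4 : R) (i : nat) : R :=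
  (4 * T v1 v2 v3 v4 TA i - 2 * T v1 v2 v3 v4 TB i - 2 * T v1 v2 v3 v4 TC i)
  / (5 * T v1 v2 v3 v4 TA i - T v1 v2 v3 v4 TB i - 4 * T v1 v2 v3 v4 TC i).

(* Main.v *)
Require Import Defs.
From mathcomp Require Import all_boot all_order all_algebra.
From mathcomp Require Import ring lra.
Import Order.TTheory GRing.Theory Num.Theory.
Local Open Scope ring_scope.

Lemma cancelK (R : realFieldType) (n d K : R) : K != 0 -> (n*K)/(d*K) = n/d.
Proof. by move=> hK; rewrite invfM mulrACA divff // mulr1. Qed.

Lemma pos_nz (R : realFieldType) (x : R) : 0 < x -> x != 0.
Proof. exact: lt0r_neq0. Qed.


Section Tr.
Variable R : realFieldType.
Variables b c d : R.
Hypotheses (hb : 0 < b) (hc : 0 < c) (hd : 0 < d).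

Let h1 : 1+b != 0. Proof. by rewrite pos_nz // addr_gt0. Qed.
Let h2 : 1+c != 0. Proof. by rewrite pos_nz // addr_gt0. Qed.
Let h3 : 1+d != 0. Proof. by rewrite pos_nz // addr_gt0. Qed.
Let h4 : b+c != 0. Proof. by rewrite pos_nz // addr_gt0. Qed.
Let h5 : b+d != 0. Proof. by rewrite pos_nz // addr_gt0. Qed.
Let h6 : c+d != 0. Proof. by rewrite pos_nz // addr_gt0. Qed.
Let h4' : c+b != 0. Proof. by rewrite pos_nz // addr_gt0. Qed.
Let h5' : d+b != 0. Proof. by rewrite pos_nz // addr_gt0. Qed.
Let h6' : d+c != 0. Proof. by rewrite pos_nz // addr_gt0. Qed.
Let hP : (1+b)*(1+c)*(1+d)*(b+c)*(b+d)*(c+d) != 0.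
Proof. by rewrite !mulf_neq0. Qed.
Let hb0 : b != 0. Proof. exact: pos_nz. Qed.
Let hc0 : c != 0. Proof. exact: pos_nz. Qed.
Let hd0 : d != 0. Proof. exact: pos_nz. Qed.
Let g1 : b+1 != 0. Proof. by rewrite addrC. Qed.
Let g2 : c+1 != 0. Proof. by rewrite addrC. Qed.
Let g3 : d+1 != 0. Proof. by rewrite addrC. Qed.
Let hy : b^+2 != 0. Proof. by rewrite expf_neq0 // pos_nz. Qed.
Let hz : c^+2 != 0. Proof. by rewrite expf_neq0 // pos_nz. Qed.
Let hw : d^+2 != 0. Proof. by rewrite expf_neq0 // pos_nz. Qed.

Lemma tr1 :
  tratio 1 b c d 1 = (4*(2*b^+2*c^+2 - b^+2*d^+2 - c^+2*d^+2)) / (2*(5*b^+2*c^+2 - b^+2*d^+2 - 4*c^+2*d^+2)).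
Proof.
rewrite /tratio -[LHS](@cancelK _ _ _ _ hP).
congr (_ / _); rewrite /T /ko /win; field.
all: by rewrite ?h1 ?h2 ?h3 ?h4 ?h5 ?h6 ?h4' ?h5' ?h6' ?hb0 ?hc0 ?hd0 ?g1 ?g2 ?g3.
Qed.

Lemma tr2 :
  tratio 1 b c d 2 = (4*(- c^+2 + 2*d^+2 - c^+2*d^+2)) / (2*(- c^+2 + 5*d^+2 - 4*c^+2*d^+2)).
Proof.
rewrite /tratio -[LHS](@cancelK _ _ _ _ hP) -[RHS](@cancelK _ _ _ _ hy).
congr (_ / _); rewrite /T /ko /win; field.
all: by rewrite ?h1 ?h2 ?h3 ?h4 ?h5 ?h6 ?h4' ?h5' ?h6' ?hb0 ?hc0 ?hd0 ?g1 ?g2 ?g3.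
Qed.

Lemma tr3 :
  tratio 1 b c d 3 = (4*(- b^+2 + 2*d^+2 - b^+2*d^+2)) / (2*(- 4*b^+2 + 5*d^+2 - b^+2*d^+2)).
Proof.
rewrite /tratio -[LHS](@cancelK _ _ _ _ hP) -[RHS](@cancelK _ _ _ _ hz).
congr (_ / _); rewrite /T /ko /win; field.
all: by rewrite ?h1 ?h2 ?h3 ?h4 ?h5 ?h6 ?h4' ?h5' ?h6' ?hb0 ?hc0 ?hd0 ?g1 ?g2 ?g3.
Qed.

Lemma tr4 :
  tratio 1 b c d 4 = (4*(- b^+2 - c^+2 + 2*b^+2*c^+2)) / (2*(- 4*b^+2 - c^+2 + 5*b^+2*c^+2)).
Proof.
rewrite /tratio -[LHS](@cancelK _ _ _ _ hP) -[RHS](@cancelK _ _ _ _ hw).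
congr (_ / _); rewrite /T /ko /win; field.
all: by rewrite ?h1 ?h2 ?h3 ?h4 ?h5 ?h6 ?h4' ?h5' ?h6' ?hb0 ?hc0 ?hd0 ?g1 ?g2 ?g3.
Qed.
End Tr.

Lemma frac_eq (R : realFieldType) (n1 d1 n2 d2 : R) :
  n1/d1 = n2/d2 -> d1 != 0 -> n1 != 0 -> n1*d2 = n2*d1.
Proof.
move=> H hd1 hn1.
have hd2 : d2 != 0.
  apply/eqP => hd2; move: H; rewrite hd2 invr0 mulr0 => /eqP.
  by rewrite mulf_eq0 invr_eq0 (negPf hd1) (negPf hn1).
by apply/eqP; rewrite -eqr_div // H.
Qed.

Lemma step2 (R : realFieldType) (y z w : R) : 0 < w -> w <= z -> z <= y -> y <= 1 ->
  (4*(- y + 2*w - y*w)) / (2*(- 4*y + 5*w - y*w)) =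
  (4*(- y - z + 2*y*z)) / (2*(- 4*y - z + 5*y*z)) -> y = 1.
Proof.
move=> hw hwz hzy hy1 H.
have hz : 0 < z by lra.
have hy : 0 < y by lra.
have [hD|hD] := eqVneq (2*(- 4*y - z + 5*y*z)) 0; first by nra.
have [hN|hN] := eqVneq (4*(- y - z + 2*y*z)) 0; first by nra.
have E := @frac_eq _ _ _ _ _ (esym H) hD hN.
have E2 : (y - 1) * (y*z*(1-w) + w*(y-z)) = 0.
  have : 24 * ((y - 1) * (y*z*(1-w) + w*(y-z))) = 0.
    have F : 24 * ((y - 1) * (y*z*(1-w) + w*(y-z))) = 4 * (- y + 2 * w - y * w) * (2 * (-4 * y - z + 5 * y * z)) - 4 * (- y - z + 2 * y * z) * (2 * (- 4 * y + 5 * w - y * w)) by ring.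
    by rewrite F -E subrr.
  by move/eqP; rewrite mulf_eq0 pnatr_eq0 /= => /eqP.
move/eqP: E2; rewrite mulf_eq0 => /orP[/eqP|/eqP hB]; first by lra.
have h1 : 0 <= y*z*(1-w) by rewrite !mulr_ge0 //; lra.
have h2 : 0 <= w*(y-z) by rewrite mulr_ge0 //; lra.
have h3 : y*z*(1-w) = 0 by lra.
move/eqP: h3; rewrite !mulf_eq0 => /orP[/orP[]|] /eqP; lra.
Qed.

Lemma step1 (R : realFieldType) (z w : R) : 0 < w -> w <= z -> z <= 1 ->
  (4*(2*1*z - 1*w - z*w)) / (2*(5*1*z - 1*w - 4*z*w)) =
  (4*(- z + 2*w - z*w)) / (2*(- z + 5*w - 4*z*w)) -> z = w.
Proof.
move=> hw hwz hz1 H.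
have hz : 0 < z by lra.
have [hD|hD] := eqVneq (2*(5*1*z - 1*w - 4*z*w)) 0; first by nra.
have [hN|hN] := eqVneq (4*(2*1*z - 1*w - z*w)) 0; first by nra.
have E := @frac_eq _ _ _ _ _ H hD hN.
have E2 : (z - w) * (z*(1-w) + w*(1-z)) = 0.
  have : 24 * ((z - w) * (z*(1-w) + w*(1-z))) = 0.
    have F : 24 * ((z - w) * (z*(1-w) + w*(1-z))) = 4 * (2 * 1 * z - 1 * w - z * w) * (2 * (- z + 5 * w - 4 * z * w)) - 4 * (- z + 2 * w - z * w) * (2 * (5 * 1 * z - 1 * w - 4 * z * w)) by ring.
    by rewrite F E subrr.
  by move/eqP; rewrite mulf_eq0 pnatr_eq0 /= => /eqP.
move/eqP: E2; rewrite mulf_eq0 => /orP[/eqP|/eqP hB]; first by lra.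
have h1 : 0 <= z*(1-w) by rewrite !mulr_ge0 //; lra.
have h2 : 0 <= w*(1-z) by rewrite mulr_ge0 //; lra.
have h3 : z*(1-w) = 0 by lra.
move/eqP: h3; rewrite !mulf_eq0 => /orP[] /eqP; lra.
Qed.

Theorem theorem9 (R : realFieldType) (v1 v2 v3 v4 : R) :
  v1 = 1 -> v2 <= v1 -> v3 <= v2 -> v4 <= v3 -> 0 < v4 ->
  (tratio v1 v2 v3 v4 1%N = tratio v1 v2 v3 v4 2%N /\
   tratio v1 v2 v3 v4 3%N = tratio v1 v2 v3 v4 4%N)
  <-> (v2 = 1 /\ v3 = v4).
Proof.
move=> -> h21 h32 h43 h4.
have h3 : 0 < v3 by lra.
have h2 : 0 < v2 by lra.
rewrite (@tr1 _ _ _ _ h2 h3 h4) (@tr2 _ _ _ _ h2 h3 h4) (@tr3 _ _ _ _ h2 h3 h4) (@tr4 _ _ _ _ h2 h3 h4).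
split.
- move=> [E1 E2].
  have hy : v2^+2 = 1.
    apply: (step2 _ _ _ _ _ _ _ _ E2); nra.
  have hb : v2 = 1.
    by move/eqP: hy; rewrite sqrf_eq1 => /orP[/eqP //| /eqP]; lra.
  split => //.
  move: E1; rewrite hb expr1n => E1.
  have hz : v3^+2 = v4^+2.
    apply: (@step1 R _ _ _ _ _ E1); nra.
  by move/eqP: hz; rewrite eqf_sqr => /orP[/eqP //| /eqP]; lra.
- move=> [-> ->]; rewrite expr1n.
  by split; congr (_ / _); ring.
Qed.
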